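(* Let $k\ge5$ be an integer and let $F:(\mathbb R^3\times\mathbb R,0)\to(\mathbb R^2,0)$, $F(x,y,z,t)=\bigl(x,\ (y(x^2+y^2+z^2))^3+x^2y(x^2+y^2+z^2)+tx^k\bigr)$, viewed as a deformation of $F_0=F(\cdot,\cdot,\cdot,0)$. Then $\operatorname{Sing}F=V(F)=\{x=y=0\}$; $F$ does not satisfy condition (L): there is no $0<\theta<1$ such that for every $x_0\in F_0^{-1}(0)\cap\operatorname{Sing}F_0\setminus\{0\}$ some $c(x_0)>0$ gives $\|F(x,t)\|^\theta\le c(x_0)\nu_{F_t}(x)$ for $(x,t)\notin\operatorname{Sing}\widetilde F$ near $(x_0,0)$; whereas $F$ does satisfy condition (P): for every $p\in F_0^{-1}(0)\cap\operatorname{Sing}F_0\setminus\{0\}$ there is $c(p)>0$ with $\|\partial F/\partial t(x,y,z,t)\|\le c(p)\nu_{F_t}(x,y,z)$ for all points $\notin\operatorname{Sing}\widetilde F$ near $(p,0)$.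
   Context: For $F=(f_1,\dots,f_m)$ depending on $(u,t)\in\mathbb R^n\times\mathbb R$, $\nu_{F_t}(u):=\min_{a\in\mathbb R^m,\|a\|=1}\bigl\|\sum_i a_i\operatorname{grad}_u f_i(u,t)\bigr\|$, where $\operatorname{grad}_u$ contains only the derivatives in the variables $u$ (here $u=(x,y,z)$). $\widetilde F(u,t)=(F(u,t),t)$; $V(F)=F^{-1}(0)$; $\operatorname{Sing}$ of a map is the set where its Jacobian has rank less than the target dimension. *)

(* Defs.v *)
From Stdlib Require Import Reals.
From Coquelicot Require Import Coquelicot.
Open Scope R_scope.

Definition fun4 := R -> R -> R -> R -> R.

Definition dX (g : fun4) x y z t := Derive (fun s => g s y z t) x.
Definition dY (g : fun4) x y z t := Derive (fun s => g x s z t) y.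
Definition dZ (g : fun4) x y z t := Derive (fun s => g x y s t) z.
Definition dT (g : fun4) x y z t := Derive (fun s => g x y z s) t.

Definition f1 : fun4 := fun x y z t => x.
Definition f2 (k : nat) : fun4 := fun x y z t =>
  (y * (x^2 + y^2 + z^2))^3 + x^2 * y * (x^2 + y^2 + z^2) + t * x^k.
(* third component of  F~(u,t) = (F(u,t), t) *)
Definition ft : fun4 := fun x y z t => t.

(* Sing F: the 2x4 Jacobian of F w.r.t. (x,y,z,t) has rank < 2,
   i.e. its rows are linearly dependent. *)
Definition SingF (k : nat) x y z t : Prop :=
  exists a1 a2 : R, (a1 <> 0 \/ a2 <> 0) /\
    a1 * dX f1 x y z t + a2 * dX (f2 k) x y z t = 0 /\
    a1 * dY f1 x y z t + a2 * dY (f2 k) x y z t = 0 /\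
    a1 * dZ f1 x y z t + a2 * dZ (f2 k) x y z t = 0 /\
    a1 * dT f1 x y z t + a2 * dT (f2 k) x y z t = 0.

(* Sing F~: the 3x4 Jacobian of F~ = (f1, f2, t) has rank < 3. *)
Definition SingFtilde (k : nat) x y z t : Prop :=
  exists a1 a2 a3 : R, (a1 <> 0 \/ a2 <> 0 \/ a3 <> 0) /\
    a1 * dX f1 x y z t + a2 * dX (f2 k) x y z t + a3 * dX ft x y z t = 0 /\
    a1 * dY f1 x y z t + a2 * dY (f2 k) x y z t + a3 * dY ft x y z t = 0 /\
    a1 * dZ f1 x y z t + a2 * dZ (f2 k) x y z t + a3 * dZ ft x y z t = 0 /\
    a1 * dT f1 x y z t + a2 * dT (f2 k) x y z t + a3 * dT ft x y z t = 0.

(* Sing F_0 for F_0 = F(.,.,.,0) : R^3 -> R^2: the 2x3 Jacobian has rank < 2. *)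
Definition SingF0 (k : nat) x y z : Prop :=
  exists a1 a2 : R, (a1 <> 0 \/ a2 <> 0) /\
    a1 * dX f1 x y z 0 + a2 * dX (f2 k) x y z 0 = 0 /\
    a1 * dY f1 x y z 0 + a2 * dY (f2 k) x y z 0 = 0 /\
    a1 * dZ f1 x y z 0 + a2 * dZ (f2 k) x y z 0 = 0.

Definition norm2 (a b : R) := sqrt (a^2 + b^2).
Definition norm3 (a b c : R) := sqrt (a^2 + b^2 + c^2).

(* nu_{F_t}(u) = min_{|a|=1} || a1 grad_u f1 (u,t) + a2 grad_u f2 (u,t) ||
   (the minimum exists; we take the greatest lower bound of the values). *)
Definition nu (k : nat) x y z t : R :=
  real (Glb_Rbar (fun r => exists a1 a2 : R, a1^2 + a2^2 = 1 /\
    r = norm3 (a1 * dX f1 x y z t + a2 * dX (f2 k) x y z t)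
              (a1 * dY f1 x y z t + a2 * dY (f2 k) x y z t)
              (a1 * dZ f1 x y z t + a2 * dZ (f2 k) x y z t))).

Definition normF (k : nat) x y z t := norm2 (f1 x y z t) (f2 k x y z t).
Definition normdFt (k : nat) x y z t := norm2 (dT f1 x y z t) (dT (f2 k) x y z t).

(* real power a^theta for a >= 0, with the convention 0^theta = 0 (theta > 0) *)
Definition rpow (a theta : R) : R :=
  if Req_EM_T a 0 then 0 else Rpower a theta.

Definition bad_point (k : nat) (p1 p2 p3 : R) : Prop :=
  f1 p1 p2 p3 0 = 0 /\ f2 k p1 p2 p3 0 = 0 /\ SingF0 k p1 p2 p3 /\
  ~ (p1 = 0 /\ p2 = 0 /\ p3 = 0).

Definition near_p0 (d p1 p2 p3 x y z t : R) : Prop :=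
  Rabs (x - p1) < d /\ Rabs (y - p2) < d /\ Rabs (z - p3) < d /\ Rabs t < d.

(* Main.v *)
Require Import Defs.
From Stdlib Require Import Reals Lra Psatz.
From Coquelicot Require Import Coquelicot.
Open Scope R_scope.

Lemma dXf2 k x y z t : dX (f2 k) x y z t =
  6*y^3*(x^2+y^2+z^2)^2*x + 2*x*y*(x^2+y^2+z^2) + 2*x^3*y + t*(INR k * x^(pred k)).
Proof. unfold dX, f2. apply is_derive_unique. auto_derive; auto. ring. Qed.
Lemma dYf2 k x y z t : dY (f2 k) x y z t =
  3*y^2*(x^2+y^2+z^2)^3 + 6*y^4*(x^2+y^2+z^2)^2 + x^2*(x^2+y^2+z^2) + 2*x^2*y^2.
Proof. unfold dY, f2. apply is_derive_unique. auto_derive; auto. ring. Qed.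
Lemma dZf2 k x y z t : dZ (f2 k) x y z t =
  6*y^3*(x^2+y^2+z^2)^2*z + 2*x^2*y*z.
Proof. unfold dZ, f2. apply is_derive_unique. auto_derive; auto. ring. Qed.
Lemma dTf2 k x y z t : dT (f2 k) x y z t = x^k.
Proof. unfold dT, f2. apply is_derive_unique. auto_derive; auto. ring. Qed.
Lemma dXf1 x y z t : dX f1 x y z t = 1.
Proof. unfold dX, f1. apply is_derive_unique. auto_derive; auto. Qed.
Lemma dYf1 x y z t : dY f1 x y z t = 0.
Proof. unfold dY, f1. apply is_derive_unique. auto_derive; auto. Qed.
Lemma dZf1 x y z t : dZ f1 x y z t = 0.
Proof. unfold dZ, f1. apply is_derive_unique. auto_derive; auto. Qed.
Lemma dTf1 x y z t : dT f1 x y z t = 0.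
Proof. unfold dT, f1. apply is_derive_unique. auto_derive; auto. Qed.
Lemma dXft x y z t : dX ft x y z t = 0.
Proof. unfold dX, ft. apply is_derive_unique. auto_derive; auto. Qed.
Lemma dYft x y z t : dY ft x y z t = 0.
Proof. unfold dY, ft. apply is_derive_unique. auto_derive; auto. Qed.
Lemma dZft x y z t : dZ ft x y z t = 0.
Proof. unfold dZ, ft. apply is_derive_unique. auto_derive; auto. Qed.
Lemma dTft x y z t : dT ft x y z t = 1.
Proof. unfold dT, ft. apply is_derive_unique. auto_derive; auto. Qed.

Lemma glb_bounds (E : R -> Prop) (L e : R) :
  E e -> (forall r, E r -> L <= r) ->
  L <= real (Glb_Rbar E) /\ real (Glb_Rbar E) <= e.
Proof.
  intros He Hl. destruct (Glb_Rbar_correct E) as [H1 H2].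
  assert (Hle := H1 e He).
  assert (HL : Rbar_le L (Glb_Rbar E)).
  { apply H2. intros r Hr. simpl. now apply Hl. }
  destruct (Glb_Rbar E); simpl in *; try easy; split; assumption.
Qed.

Lemma glb_le (E : R -> Prop) (L e : R) :
  E e -> (forall r, E r -> L <= r) -> real (Glb_Rbar E) <= e.
Proof. intros; apply (glb_bounds E L e); auto. Qed.
Lemma glb_ge (E : R -> Prop) (L e : R) :
  E e -> (forall r, E r -> L <= r) -> L <= real (Glb_Rbar E).
Proof. intros; apply (glb_bounds E L e); auto. Qed.

Lemma pow_zero_iff x n : (1 <= n)%nat -> (x^n = 0 <-> x = 0).
Proof.
  intros Hn; split; intros H.
  - destruct (Req_dec x 0); auto. exfalso. apply (pow_nonzero x n H0 H).
  - subst. apply pow_i. lia.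
Qed.

Lemma V_iff k (hk : (5 <= k)%nat) x y z t :
  (f1 x y z t = 0 /\ f2 k x y z t = 0) <-> (x = 0 /\ y = 0).
Proof.
  unfold f1, f2. split.
  - intros [Hx H]. subst x. split; auto.
    rewrite (pow_i k) in H by lia.
    assert (H3 : (y * (0 ^ 2 + y ^ 2 + z ^ 2)) ^ 3 = 0).
    { match type of H with ?A = _ => transitivity A end; [ring|exact H]. }
    assert (H4 : y * (0 ^ 2 + y ^ 2 + z ^ 2) = 0).
    { apply (proj1 (pow_zero_iff _ 3 ltac:(lia))). exact H3. }
    destruct (Req_dec y 0) as [|Hy]; auto. exfalso.
    assert (0 < y^2) by (simpl; nra). 
    assert (0 < y * y * (0 ^ 2 + y ^ 2 + z ^ 2)) by (simpl in *; nra).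
    nra.
  - intros [-> ->]. split; auto. rewrite (pow_i k) by lia. ring.
Qed.

Lemma pos_y_term y z : y <> 0 ->
  0 < 3*y^2*(y^2+z^2)^3 + 6*y^4*(y^2+z^2)^2.
Proof.
  intros Hy. assert (0 < y^2) by (simpl; nra).
  assert (0 < y^2+z^2) by (simpl in *; nra).
  assert (0 < (y^2+z^2)^2) by (apply pow_lt; lra).
  assert (0 < (y^2+z^2)^3) by (apply pow_lt; lra).
  assert (0 < y^4) by (replace (y^4) with (y^2*y^2) by ring; nra).
  nra.
Qed.

Lemma Sing_iff k (hk : (5 <= k)%nat) x y z t :
  SingF k x y z t <-> (f1 x y z t = 0 /\ f2 k x y z t = 0).
Proof.
  rewrite V_iff by exact hk. unfold SingF.
  rewrite dXf1, dYf1, dZf1, dTf1, dXf2, dYf2, dZf2, dTf2. split.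
  - intros (a1 & a2 & Hne & E1 & E2 & E3 & E4).
    destruct (Req_dec a2 0) as [Ha2|Ha2].
    { subst a2. exfalso. destruct Hne; lra. }
    assert (Hxk : x^k = 0).
    { apply (Rmult_eq_reg_l a2); auto. lra. }
    apply (proj1 (pow_zero_iff _ k ltac:(lia))) in Hxk. subst x. split; auto.
    destruct (Req_dec y 0) as [|Hy]; auto. exfalso.
    assert (Hf : 3 * y ^ 2 * (0 ^ 2 + y ^ 2 + z ^ 2) ^ 3 + 6 * y ^ 4 * (0 ^ 2 + y ^ 2 + z ^ 2) ^ 2 +
     0 ^ 2 * (0 ^ 2 + y ^ 2 + z ^ 2) + 2 * 0 ^ 2 * y ^ 2 = 0).
    { apply (Rmult_eq_reg_l a2); auto. lra. }
    pose proof (pos_y_term y z Hy).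
    replace (0^2 + y^2 + z^2) with (y^2+z^2) in Hf by ring.
    simpl pow in Hf at 3 4. nra.
  - intros [-> ->]. exists (- (t * (INR k * 0 ^ Init.Nat.pred k))), 1.
    rewrite (pow_i (pred k)) by lia. rewrite (pow_i k) by lia.
    split; [right; lra|]. repeat split; ring.
Qed.

Lemma pow_le1 a n : 0 <= a <= 1 -> 0 <= a^n <= 1.
Proof.
  intros Ha. induction n; simpl; [lra|]. nra.
Qed.

Lemma pow_le_sq a n : (2 <= n)%nat -> 0 <= a <= 1 -> a^n <= a^2.
Proof.
  intros Hn Ha. replace n with (2 + (n-2))%nat by lia. rewrite pow_add.
  pose proof (pow_le1 a (n-2) Ha). assert (0 <= a^2) by (simpl; nra). nra.
Qed.

Lemma bad001 k (hk : (5 <= k)%nat) : bad_point k 0 0 1.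
Proof.
  unfold bad_point. split; [reflexivity|]. split.
  { unfold f2. rewrite (pow_i k) by lia. ring. }
  split; [|lra]. unfold SingF0. exists 0, 1. split; [right; lra|].
  rewrite dXf1, dYf1, dZf1, dXf2, dYf2, dZf2. repeat split; ring.
Qed.

Lemma notL k (hk : (5 <= k)%nat) :
  ~ (exists theta : R, 0 < theta < 1 /\
       forall p1 p2 p3 : R, bad_point k p1 p2 p3 ->
         exists c : R, 0 < c /\ exists d : R, 0 < d /\
           forall x y z t : R, near_p0 d p1 p2 p3 x y z t ->
             ~ SingFtilde k x y z t ->
             rpow (normF k x y z t) theta <= c * nu k x y z t).
Proof.
  intros (th & Hth & H). destruct (H 0 0 1 (bad001 k hk)) as (c & Hc & d & Hd & Hn).
  set (x := Rmin (d/2) (Rmin (1/2) (1/(4*c)))).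
  assert (Hx0 : 0 < x).
  { unfold x. repeat apply Rmin_pos; try lra. apply Rdiv_lt_0_compat; lra. }
  assert (Hxd : x <= d/2) by apply Rmin_l.
  assert (Hx1 : x <= 1/2) by (eapply Rle_trans; [apply Rmin_r|apply Rmin_l]).
  assert (Hxc : x <= 1/(4*c)) by (eapply Rle_trans; [apply Rmin_r|apply Rmin_r]).
  assert (Hcx : c * x <= 1/4).
  { apply (Rmult_le_compat_l c) in Hxc; [|lra]. 
    replace (c * (1/(4*c))) with (1/4) in Hxc by (field; lra). lra. }
  specialize (Hn x 0 1 0).
  assert (Hnear : near_p0 d 0 0 1 x 0 1 0).
  { unfold near_p0. rewrite !Rminus_0_r, Rminus_diag, Rabs_R0, Rabs_pos_eq by lra.
    repeat split; lra. }
  assert (HnS : ~ SingFtilde k x 0 1 0).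
  { unfold SingFtilde. rewrite dXf1, dYf1, dZf1, dTf1, dXf2, dYf2, dZf2, dTf2,
      dXft, dYft, dZft, dTft.
    intros (a1 & a2 & a3 & Hne & E1 & E2 & E3 & E4).
    assert (Ha1 : a1 = 0) by (revert E1; simpl; intros; nra).
    subst a1.
    assert (Hp : 0 < x ^ 2 * (x ^ 2 + 0 ^ 2 + 1 ^ 2)) by (simpl; nra).
    assert (Ha2 : a2 = 0).
    { assert (a2 * (x ^ 2 * (x ^ 2 + 0 ^ 2 + 1 ^ 2)) = 0) by (revert E2; simpl; intros; nra).
      apply Rmult_integral in H0. destruct H0; auto. lra. }
    subst a2. destruct Hne as [|[|]]; lra. }
  specialize (Hn Hnear HnS).
  assert (HF : normF k x 0 1 0 = x).
  { unfold normF, norm2, f1, f2. replace (x ^ 2 + _ ^ 2) with (x^2) by ring.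
    apply sqrt_pow2; lra. }
  rewrite HF in Hn. unfold rpow in Hn.
  destruct (Req_EM_T x 0) as [|_]; [lra|].
  assert (HR : x <= Rpower x th).
  { unfold Rpower. rewrite <- (exp_ln x) at 1 by lra.
    assert (ln x < 0) by (rewrite <- ln_1; apply ln_increasing; lra).
    destruct (Rle_lt_or_eq_dec (ln x) (th * ln x)) as [Hl|Hl]; [nra| |].
    - left; apply exp_increasing; exact Hl.
    - right; f_equal; exact Hl. }
  assert (Hnu : nu k x 0 1 0 <= x^2 * (x^2 + 1)).
  { unfold nu. apply (glb_le _ 0 (x^2*(x^2+1))).
    - exists 0, 1. split; [ring|]. unfold norm3.
      rewrite dXf1, dYf1, dZf1, dXf2, dYf2, dZf2.
      replace ((0 * 1 + 1 * _) ^ 2 + _ ^ 2 + _ ^ 2) with ((x^2*(x^2+1))^2) by ring.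
      rewrite sqrt_pow2; [reflexivity|]. simpl; nra.
    - intros r (a1 & a2 & _ & ->). unfold norm3. apply sqrt_pos.
    }
  assert (0 <= x^2*(x^2+1)) by (simpl; nra).
  assert (c * nu k x 0 1 0 <= c * (x^2*(x^2+1))) by (apply Rmult_le_compat_l; lra).
  assert (c * (x^2*(x^2+1)) < x).
  { replace (c * (x^2*(x^2+1))) with ((c*x) * (x * (x^2+1))) by ring.
    assert (x * (x^2+1) <= 5/8) by (simpl; nra).
    assert (0 <= c*x) by nra.
    assert (x * (x^2+1) > 0) by (simpl; nra). nra. }
  lra.
Qed.

Lemma key a1 a2 w G M g0 : a1^2+a2^2=1 -> w^2 <= M -> 0 <= g0 <= G ->
  Rmin (g0/(2*(1+2*M))) (1/2) <= (a1+a2*w)^2 + a2^2*G.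
Proof.
  intros Ha Hw Hg.
  assert (HM : 0 <= M) by (simpl in Hw; nra).
  set (m := Rmin (g0/(2*(1+2*M))) (1/2)).
  assert (Hm1 : m <= 1/2) by apply Rmin_r.
  assert (Hm2 : m <= g0/(2*(1+2*M))) by apply Rmin_l.
  assert (Hm0 : 0 <= m).
  { unfold m. apply Rmin_glb; [|lra]. apply Rmult_le_pos; [lra|].
    left; apply Rinv_0_lt_compat; lra. }
  assert (Hm3 : m * (2*(1+2*M)) <= g0).
  { apply (Rmult_le_compat_r (2*(1+2*M))) in Hm2; [|lra].
    replace (g0 / (2 * (1 + 2 * M)) * (2 * (1 + 2 * M))) with g0 in Hm2 by (field; lra).
    exact Hm2. }
  set (A := a1 + a2*w). set (B := a2).
  assert (H1 : 1 <= 2*A^2 + B^2*(1+2*w^2)).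
  { replace (2*A^2 + B^2*(1+2*w^2)) with (a1^2+a2^2 + (a1+2*a2*w)^2) by (unfold A, B; ring).
    rewrite Ha. pose proof (pow2_ge_0 (a1+2*a2*w)). lra. }
  assert (HB : 0 <= B^2) by (simpl; nra).
  assert (HA : 0 <= A^2) by (simpl; nra).
  assert (m*(1+2*w^2) <= G) by nra.
  nra.
Qed.

Lemma prod_bound u v V : Rabs u <= 1 -> 0 <= v <= V -> Rabs (u*v) <= V.
Proof.
  intros Hu Hv. rewrite Rabs_mult, (Rabs_pos_eq v) by lra.
  pose proof (Rabs_pos u). nra.
Qed.
Lemma abs_mul1 a b : Rabs a <= 1 -> Rabs b <= 1 -> Rabs (a*b) <= 1.
Proof. intros. rewrite Rabs_mult. pose proof (Rabs_pos a); pose proof (Rabs_pos b). nra. Qed.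
Lemma abs_pow1 a n : Rabs a <= 1 -> Rabs (a^n) <= 1.
Proof. intros. rewrite <- RPow_abs. apply pow_le1. split; [apply Rabs_pos|auto]. Qed.

Lemma w_bound k x y z t R0 : Rabs x <= 1 -> Rabs y <= 1 -> Rabs t <= 1 ->
  0 <= x^2+y^2+z^2 <= R0 ->
  Rabs (6*y^3*(x^2+y^2+z^2)^2*x + 2*x*y*(x^2+y^2+z^2) + 2*x^3*y + t*(INR k * x^(pred k)))
  <= 6*R0^2 + 2*R0 + 2 + INR k.
Proof.
  intros Hx Hy Ht Hr. set (r := x^2+y^2+z^2) in *.
  pose proof (pos_INR k).
  assert (Hr2 : 0 <= r^2 <= R0^2) by (simpl; nra).
  eapply Rle_trans; [apply Rabs_triang|].
  eapply Rle_trans; [apply Rplus_le_compat_r; apply Rabs_triang|].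
  eapply Rle_trans; [apply Rplus_le_compat_r; apply Rplus_le_compat_r; apply Rabs_triang|].
  repeat apply Rplus_le_compat.
  - replace (6 * y ^ 3 * r ^ 2 * x) with ((y^3*x)*(6*r^2)) by ring.
    apply prod_bound; [apply abs_mul1; [apply abs_pow1|]; auto|lra].
  - replace (2 * x * y * r) with ((x*y)*(2*r)) by ring.
    apply prod_bound; [apply abs_mul1; auto|lra].
  - replace (2 * x^3 * y) with ((x^3*y)*2) by ring.
    apply prod_bound; [apply abs_mul1; [apply abs_pow1|]; auto|lra].
  - replace (t * (INR k * x ^ Init.Nat.pred k)) with ((t*x^(pred k))*INR k) by ring.
    apply prod_bound; [apply abs_mul1; [|apply abs_pow1]; auto|lra].
Qed.

Lemma condP k (hk : (5 <= k)%nat) p1 p2 p3 : bad_point k p1 p2 p3 ->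
     exists c : R, 0 < c /\ exists d : R, 0 < d /\
       forall x y z t : R, near_p0 d p1 p2 p3 x y z t ->
         ~ SingFtilde k x y z t ->
         normdFt k x y z t <= c * nu k x y z t.
Proof.
  intros (Hf1 & Hf2 & _ & Hnz).
  destruct (proj1 (V_iff k hk p1 p2 p3 0) (conj Hf1 Hf2)) as [-> ->].
  assert (Hp3 : p3 <> 0) by (intro; apply Hnz; auto).
  set (P := Rabs p3). assert (HP : 0 < P) by (apply Rabs_pos_lt; auto).
  set (R0 := 2 + (P+1)^2).
  set (S := 6*R0^2 + 2*R0 + 2 + INR k).
  set (M := S^2).
  assert (HM : 0 <= M) by (unfold M; apply pow2_ge_0).
  set (C := P^4/(32*(1+2*M))).
  assert (HC : 0 < C).
  { unfold C. apply Rdiv_lt_0_compat; [apply pow_lt; lra|lra]. }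
  exists (/C + 2). split; [pose proof (Rinv_0_lt_compat C HC); lra|].
  exists (Rmin 1 (P/2)). split; [apply Rmin_pos; lra|].
  intros x y z t (Hx & Hy & Hz & Ht) _.
  rewrite Rminus_0_r in Hx, Hy.
  assert (Hd1 : Rmin 1 (P/2) <= 1) by apply Rmin_l.
  assert (Hd2 : Rmin 1 (P/2) <= P/2) by apply Rmin_r.
  assert (Hz1 : P/2 <= Rabs z).
  { pose proof (Rabs_triang_inv p3 (p3 - z)). replace (p3 - (p3 - z)) with z in H by ring.
    rewrite Rabs_minus_sym in H. fold P in H. lra. }
  assert (Hz2 : Rabs z <= P + 1).
  { pose proof (Rabs_triang (z - p3) p3). replace (z - p3 + p3) with z in H by ring.
    fold P in H. lra. }
  assert (Hzz : (P/2)^2 <= z^2).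
  { rewrite <- (pow2_abs z). apply pow_incr. lra. }
  assert (Hz3 : z^2 <= (P+1)^2).
  { rewrite <- (pow2_abs z). apply pow_incr. pose proof (Rabs_pos z). lra. }
  assert (Hx2 : x^2 <= 1) by (rewrite <- (pow2_abs x); pose proof (Rabs_pos x); simpl; nra).
  assert (Hy2 : y^2 <= 1) by (rewrite <- (pow2_abs y); pose proof (Rabs_pos y); simpl; nra).
  set (r := x^2+y^2+z^2).
  assert (Hr : 0 <= r <= R0).
  { unfold r, R0. pose proof (pow2_ge_0 x); pose proof (pow2_ge_0 y); pose proof (pow2_ge_0 z). lra. }
  assert (Hrz : (P/2)^2 <= r).
  { unfold r. pose proof (pow2_ge_0 x); pose proof (pow2_ge_0 y). lra. }
  set (w := dX (f2 k) x y z t).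
  assert (Hw : w^2 <= M).
  { unfold w, M. rewrite dXf2. fold r. rewrite <- (pow2_abs (_ + _)).
    apply pow_incr. split; [apply Rabs_pos|]. unfold S.
    apply w_bound; try lra. unfold r in Hr; lra. }
  set (fy := dY (f2 k) x y z t). set (fz := dZ (f2 k) x y z t).
  assert (Hfy : x^2 * (P/2)^2 <= fy).
  { unfold fy. rewrite dYf2. fold r.
    assert (0 <= x^2) by apply pow2_ge_0. assert (0 <= y^2) by apply pow2_ge_0.
    assert (0 <= r^2) by apply pow2_ge_0. assert (0 <= r^3) by (apply pow_le; lra).
    assert (0 <= y^4) by (replace (y^4) with (y^2*y^2) by ring; nra).
    nra. }
  set (g0 := (x^2 * (P/2)^2)^2).
  assert (Hg : 0 <= g0 <= fy^2 + fz^2).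
  { unfold g0. split; [apply pow2_ge_0|].
    assert (0 <= x^2 * (P/2)^2) by (apply Rmult_le_pos; apply pow2_ge_0).
    pose proof (pow2_ge_0 fz). assert ((x^2*(P/2)^2)^2 <= fy^2) by (apply pow_incr; lra). lra. }
  set (m := Rmin (g0/(2*(1+2*M))) (1/2)).
  assert (Hm0 : 0 <= m).
  { unfold m. apply Rmin_glb; [|lra]. apply Rmult_le_pos; [apply Hg|].
    left; apply Rinv_0_lt_compat; lra. }
  assert (Hnu : sqrt m <= nu k x y z t).
  { unfold nu. apply (glb_ge _ (sqrt m) (norm3 (1 * dX f1 x y z t + 0 * dX (f2 k) x y z t)
         (1 * dY f1 x y z t + 0 * dY (f2 k) x y z t)
         (1 * dZ f1 x y z t + 0 * dZ (f2 k) x y z t))).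
    - exists 1, 0. split; [ring|reflexivity].
    - intros r' (a1 & a2 & Ha & ->). unfold norm3. apply sqrt_le_1_alt.
      rewrite dXf1, dYf1, dZf1. fold w fy fz.
      replace ((a1 * 1 + a2 * w) ^ 2 + (a1 * 0 + a2 * fy) ^ 2 + (a1 * 0 + a2 * fz) ^ 2)
        with ((a1 + a2*w)^2 + a2^2*(fy^2+fz^2)) by ring.
      apply key; auto. }
  assert (HnF : normdFt k x y z t <= x^2).
  { unfold normdFt, norm2. rewrite dTf1, dTf2.
    replace (0^2 + (x^k)^2) with ((x^k)^2) by ring.
    rewrite <- (pow2_abs (x^k)), sqrt_pow2 by apply Rabs_pos.
    rewrite <- RPow_abs, <- (pow2_abs x). apply pow_le_sq; [lia|].
    split; [apply Rabs_pos|lra]. }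
  set (c := /C + 2).
  assert (HiC : 0 < /C) by (apply Rinv_0_lt_compat; lra).
  assert (Hx4 : 0 <= x^4 <= 1).
  { replace (x^4) with (x^2*x^2) by ring. pose proof (pow2_ge_0 x). nra. }
  assert (Hmx : x^4 <= c^2 * m).
  { assert (Hg0 : g0/(2*(1+2*M)) = x^4 * C) by (unfold g0, C; field; lra).
    unfold m. rewrite Hg0. unfold Rmin. destruct (Rle_dec (x^4*C) (1/2)).
    - assert (c*c >= c * /C) by (unfold c; nra).
      assert (c * /C * C = c) by (field; lra).
      assert (c^2 * C >= 1).
      { replace (c^2) with (c*c) by ring. unfold c in *. nra. }
      nra.
    - unfold c. nra. }
  pose proof (sqrt_pos m).
  assert (Hcm : (c * sqrt m)^2 = c^2 * m).
  { replace ((c * sqrt m)^2) with (c^2 * (sqrt m * sqrt m)) by ring.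
    rewrite sqrt_sqrt; auto. }
  assert (x^2 <= c * sqrt m).
  { assert (0 <= c * sqrt m) by (unfold c; nra).
    assert (0 <= x^2) by apply pow2_ge_0.
    destruct (Rle_dec (x^2) (c * sqrt m)) as [|Hn]; auto. exfalso.
    assert (c * sqrt m < x^2) by lra.
    assert ((c*sqrt m)^2 < (x^2)^2) by (simpl; nra).
    replace ((x^2)^2) with (x^4) in * by ring. lra. }
  assert (c * sqrt m <= c * nu k x y z t) by (apply Rmult_le_compat_l; unfold c; lra).
  lra.
Qed.

Theorem mainTheorem9 (k : nat) (hk : (5 <= k)%nat) :
  (* Sing F = V(F) *)
  (forall x y z t : R, SingF k x y z t <-> (f1 x y z t = 0 /\ f2 k x y z t = 0)) /\
  (* V(F) = {x = y = 0} *)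
  (forall x y z t : R, (f1 x y z t = 0 /\ f2 k x y z t = 0) <-> (x = 0 /\ y = 0)) /\
  (* F does not satisfy condition (L) *)
  ~ (exists theta : R, 0 < theta < 1 /\
       forall p1 p2 p3 : R, bad_point k p1 p2 p3 ->
         exists c : R, 0 < c /\ exists d : R, 0 < d /\
           forall x y z t : R, near_p0 d p1 p2 p3 x y z t ->
             ~ SingFtilde k x y z t ->
             rpow (normF k x y z t) theta <= c * nu k x y z t) /\
  (* F satisfies condition (P) *)
  (forall p1 p2 p3 : R, bad_point k p1 p2 p3 ->
     exists c : R, 0 < c /\ exists d : R, 0 < d /\
       forall x y z t : R, near_p0 d p1 p2 p3 x y z t ->
         ~ SingFtilde k x y z t ->
         normdFt k x y z t <= c * nu k x y z t).
Proof.
  split; [intros; apply Sing_iff; exact hk|].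
  split; [intros; apply V_iff; exact hk|].
  split; [apply notL; exact hk|].
  intros; apply condP; auto.
Qed.
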